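(* Let $W$ be a finite set and $\mathtt{N}=\{N_1,\ldots,N_r\}$ a sequence of subsets of $W$. Then $$|K(\mathtt{N})|\simeq\begin{cases}S^{|W|-1}&\text{if }N_1\cup\cdots\cup N_r=W,\\ *&\text{otherwise},\end{cases}$$ where $S^{-1}=\emptyset$. Moreover, if $\mathtt{M}=\{M_1,\ldots,M_r\}$ is a sequence of subsets of $W$ with $M_i\subset N_i$ for all $i$ and $M_1\cup\cdots\cup M_r=W$, then the inclusion $|K(\mathtt{M})|\to|K(\mathtt{N})|$ is a homotopy equivalence.
   Context: For a sequence $\mathtt{N}=\{N_1,\ldots,N_r\}$ of subsets of a finite set $W$ (repetitions allowed), choose distinct points $a_1,\ldots,a_r\notin W$, set $\widetilde{N}_i=N_i\sqcup\{a_i\}$; $K(\mathtt{N})$ is the simplicial complex on $W\sqcup\{a_1,\ldots,a_r\}$ whose minimal non-faces are exactly $\widetilde{N}_1,\ldots,\widetilde{N}_r$ (faces: subsets containing no $\widetilde{N}_i$). $K(\mathtt{M})$ is formed with the same points $a_i$, so $K(\mathtt{M})\subset K(\mathtt{N})$ when $M_i\subset N_i$. $|L|$ denotes geometric realization. *)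

(* Defs.v *)
From HB Require Import structures.
From mathcomp Require Import all_boot all_order all_algebra.
From mathcomp Require Import all_classical all_reals topology normedtype.
Import numFieldNormedType.Exports.
Set Implicit Arguments. Unset Strict Implicit. Unset Printing Implicit Defensive.
Import Order.TTheory GRing.Theory Num.Theory.
Local Open Scope classical_set_scope.
Local Open Scope ring_scope.

Section Homotopy.
Context (R : realType).

Definition cont_map {X Y : topologicalType} (f : X -> Y) (A : set X) (B : set Y) :=
  {within A, continuous f} /\ f @` A `<=` B.

Definition homotopic {X Y : topologicalType} (A : set X) (B : set Y) (f0 f1 : X -> Y) :=
  exists H : R * X -> Y,
    cont_map H (`[0, 1] `*` A) B /\
    (forall x, A x -> H (0, x) = f0 x) /\
    (forall x, A x -> H (1, x) = f1 x).

Definition homotopy_equivalence {X Y : topologicalType} (f : X -> Y) (A : set X) (B : set Y) :=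
  cont_map f A B /\
  exists g : Y -> X, cont_map g B A /\
    homotopic A A (g \o f) id /\ homotopic B B (f \o g) id.

Definition homotopy_equiv {X Y : topologicalType} (A : set X) (B : set Y) :=
  exists f : X -> Y, homotopy_equivalence f A B.

End Homotopy.

(** The complex K(N) on W ⊔ {a_1..a_r}: vertices W + 'I_r, with a_i = inr i. *)
Section Complex.
Context {W : finType} {r : nat}.

Definition Ntilde (N : 'I_r -> {set W}) (i : 'I_r) : {set W + 'I_r} :=
  (@inl W 'I_r) @: N i :|: [set inr i].

Definition is_face (N : 'I_r -> {set W}) (s : {set W + 'I_r}) : bool :=
  [forall i, ~~ (Ntilde N i \subset s)].

(** geometric realization |K(N)| inside R^(W ⊔ {a_i}) with the product topology ({ptws _ -> R}):
    points of the standard simplex whose support is a face. *)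
Definition realization (R : realType) (N : 'I_r -> {set W}) : set {ptws W + 'I_r -> R} :=
  [set x | (forall v, 0 <= x v) /\ (\sum_v x v = 1) /\
           is_face N [set v | x v != 0]].
End Complex.

(** the unit unit_sphere S^(|W|-1) in R^W (empty when W is empty). *)
Definition unit_sphere (R : realType) (W : finType) : set {ptws W -> R} :=
  [set x | \sum_w (x w) ^+ 2 = 1].

Definition one_point (R : realType) (W : finType) : set {ptws W -> R} :=
  [set (fun _ => 0)].

Arguments realization {W r} R N _.
Arguments unit_sphere : clear implicits.
Arguments one_point : clear implicits.
Arguments cont_map {X Y} f A B.
Arguments homotopic R {X Y} A B f0 f1.
Arguments homotopy_equivalence R {X Y} f A B.
Arguments homotopy_equiv R {X Y} A B.

(* Main.v *)
Require Import Defs.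
From HB Require Import structures.
From mathcomp Require Import all_boot all_order all_algebra.
From mathcomp Require Import all_classical all_reals topology normedtype.
From mathcomp Require Import realfun.
From mathcomp Require Import ring lra.
Import numFieldNormedType.Exports.
Set Implicit Arguments. Unset Strict Implicit. Unset Printing Implicit Defensive.
Import Order.TTheory GRing.Theory Num.Theory.
Local Open Scope classical_set_scope.
Local Open Scope ring_scope.

Section Tool.
Context (R : realType) (T : topologicalType) (p : T).
Definition ct (f : T -> R) := {for p, continuous f}.

Lemma ct_cst c : ct (fun=> c).
Proof. exact: cvg_cst. Qed.
Lemma ctD f g : ct f -> ct g -> ct (fun x => f x + g x).
Proof. by move=> hf hg; apply: cvgD. Qed.
Lemma ctN f : ct f -> ct (fun x => - f x).
Proof. by move=> hf; apply: cvgN. Qed.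
Lemma ctB f g : ct f -> ct g -> ct (fun x => f x - g x).
Proof. by move=> hf hg; apply: ctD => //; apply: ctN. Qed.
Lemma ctM f g : ct f -> ct g -> ct (fun x => f x * g x).
Proof. by move=> hf hg; apply: cvgM. Qed.
Lemma ctV f : f p != 0 -> ct f -> ct (fun x => (f x)^-1).
Proof. by move=> hf h; apply: cvgV. Qed.
Lemma ctmax f g : ct f -> ct g -> ct (fun x => Num.max (f x) (g x)).
Proof. by move=> hf hg; apply: (continuous_max hf hg). Qed.
Lemma ctsqrt f : ct f -> ct (fun x => Num.sqrt (f x)).
Proof. move=> hf; apply: continuous_comp hf _; exact: sqrt_continuous. Qed.
Lemma ctsum (I : Type) (s : seq I) (P : pred I) (F : I -> T -> R) :
  (forall i, ct (F i)) -> ct (fun x => \sum_(i <- s | P i) F i x).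
Proof.
move=> hF; elim: s => [|i s IH].
  by under eq_fun do rewrite big_nil; exact: ct_cst.
under eq_fun do rewrite big_cons.
case: (P i) => //; exact: ctD.
Qed.
Lemma ptws_ct (V : Type) (f : T -> {ptws V -> R}) :
  (forall v, ct (fun x => f x v)) -> {for p, continuous f}.
Proof.
move=> h; apply/cvg_sup => i A /=.
rewrite nbhsE => -[B [[C Cop CB] Bt] sBA].
have : nbhs (f p i) C by apply: open_nbhs_nbhs; split => //; rewrite -CB in Bt.
move/h; rewrite nbhs_simpl /= => hC.
move: hC; rewrite nbhsE => -[D oD sD]; exists D => // x Dx; apply: sBA; rewrite -CB; exact: sD.
Qed.
Lemma ct_comp (U : topologicalType) (g : T -> U) (h : U -> R) :
  {for p, continuous g} -> {for g p, continuous h} -> ct (fun x => h (g x)).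
Proof. move=> hg hh; exact: continuous_comp hg hh. Qed.
End Tool.

Lemma ct_eval (R : realType) (V : eqType) (v : V) (x : {ptws V -> R}) :
  {for x, continuous (fun y : {ptws V -> R} => y v)}.
Proof. exact: (@proj_continuous V (fun _ => R) v x). Qed.

Lemma ct_fst (R : realType) (Y : topologicalType) (q : R * Y) :
  ct q (fun z : R * Y => z.1).
Proof. exact: cvg_fst. Qed.
Lemma ct_snd (R : realType) (Y : topologicalType) (q : R * Y) :
  {for q, continuous (fun z : R * Y => z.2)}.
Proof. exact: cvg_snd. Qed.

Lemma sum_ge_term (R : realType) (I : finType) (F : I -> R) i :
  (forall j, 0 <= F j) -> F i <= \sum_j F j.
Proof. move=> h; rewrite (bigD1 i) //= lerDl; exact: sumr_ge0. Qed.

Lemma faceP (W : finType) (r : nat) (Q : 'I_r -> {set W}) (S : {set W + 'I_r}) :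
  reflect (forall i, inr i \in S -> exists2 w, w \in Q i & inl w \notin S) (is_face Q S).
Proof.
apply: (iffP forallP) => h i.
  move=> iS; have := h i; rewrite /Ntilde finset.subUset finset.sub1set iS andbT.
  case/fintype.subsetPn => v /imsetP [w wQ ->] wS; by exists w.
rewrite /Ntilde finset.subUset finset.sub1set; apply/negP => /andP [/fintype.subsetP sub iS].
have [w wQ wS] := h i iS; move/negP: wS; apply; apply: sub; exact: imset_f.
Qed.

Section Main.
Context (R : realType) (W : finType) (r : nat).
Local Notation V := (W + 'I_r)%type.
Local Notation X := {ptws V -> R}.

Definition facecond (Q : 'I_r -> {set W}) (u : V -> R) :=
  forall i, u (inr i) != 0 -> exists2 w, w \in Q i & u (inl w) = 0.

Lemma realP Q (x : X) : realization R Q x ->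
  [/\ forall v, 0 <= x v, \sum_v x v = 1 & facecond Q x].
Proof.
move=> [h0 [h1 hf]]; split => // i xi.
have /faceP/(_ i) : is_face Q [set v | x v != 0] by [].
rewrite inE => /(_ xi) [w wQ]; rewrite inE negbK => /eqP; by exists w.
Qed.

Definition nz (u : V -> R) : X := fun v => u v / \sum_v' u v'.

Lemma nz_real Q (u : V -> R) :
  (forall v, 0 <= u v) -> 0 < \sum_v u v -> facecond Q u -> realization R Q (nz u).
Proof.
move=> u0 D0 hf; split; [|split].
- move=> v; rewrite /nz divr_ge0 // ltW //.
- rewrite /nz -mulr_suml mulfV // gt_eqF //.
- apply/faceP => i; rewrite inE /nz mulf_eq0 invr_eq0 (gt_eqF D0) orbF => ui.
  have [w wQ uw] := hf i ui; by exists w => //; rewrite inE /nz uw mul0r eqxx.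
Qed.

Lemma nzZ (c : R) (u : V -> R) : c != 0 -> nz (fun v => c * u v) = nz u.
Proof.
move=> c0; apply: funext => v; rewrite /nz -mulr_sumr invfM mulrACA mulfV ?mul1r //.
Qed.

Lemma sumV (F : V -> R) : \sum_v F v = \sum_w F (inl w) + \sum_i F (inr i).
Proof. exact: big_sumType. Qed.

Definition tau (x : X) := \sum_i x (inr i).

Definition rawH (P : 'I_r -> {set W}) (t : R) (x : X) (v : V) : R :=
  match v with
  | inl w => Num.max 0 (x (inl w) - t * tau x)
  | inr i => (1 - t) * x (inr i) + \sum_(w in P i) Num.max 0 (t * tau x - x (inl w))
  end.
Definition Hh P (q : R * X) : X := nz (rawH P q.1 q.2).


Lemma tau_ge0 (x : X) : (forall v, 0 <= x v) -> 0 <= tau x.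
Proof. by move=> h; apply: sumr_ge0 => i _. Qed.

Lemma rawH_ge0 P t (x : X) : 0 <= t -> t <= 1 -> (forall v, 0 <= x v) ->
  forall v, 0 <= rawH P t x v.
Proof.
move=> t0 t1 h [w|i] /=; first by rewrite le_max lexx.
apply: addr_ge0; first by apply: mulr_ge0 => //; rewrite subr_ge0.
by apply: sumr_ge0 => w _; rewrite le_max lexx.
Qed.

Lemma Hh_good (P Q : 'I_r -> {set W}) (x : X) (t : R) :
  (forall i, P i \subset Q i) -> (\bigcup_(i < r) P i = [set: W])%SET ->
  realization R Q x -> 0 <= t -> t <= 1 ->
  [/\ 0 < \sum_v rawH P t x v, realization R Q (Hh P (t, x))
    & t = 1 -> realization R P (Hh P (t, x))].
Proof.
move=> PQ cov hx t0 t1; have [x0 x1 xf] := realP hx.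
have tau0 := tau_ge0 x0.
have r0 := rawH_ge0 P t0 t1 x0.
have D0 : 0 < \sum_v rawH P t x v.
  have [tz|tp] := eqVneq (tau x) 0.
    have xi0 : forall i, x (inr i) = 0.
      by move=> i; apply: (psumr_eq0P _ tz) => // j _.
    have sig1 : \sum_w x (inl w) = 1.
      by rewrite -x1 sumV; move: tz; rewrite /tau => ->; rewrite addr0.
    rewrite sumV; apply: (@lt_le_trans _ _ (\sum_w rawH P t x (inl w))).
      apply: (@lt_le_trans _ _ (\sum_w x (inl w))); first by rewrite sig1 ltr01.
      by apply: ler_sum => w _ /=; rewrite tz mulr0 subr0 le_max lexx orbT.
    by rewrite lerDl; apply: sumr_ge0 => i _.
  have [i /andP [_ xi]] : exists i, true && (0 < x (inr i)).
    apply: psumr_neq0P; [by move=> j _ | exact/eqP].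
  have [w wQ xw] := xf i (lt0r_neq0 xi).
  have : w \in [set: W]%SET by rewrite inE.
  rewrite -cov => /bigcupP [j _ wP].
  have [t1e|t1'] := eqVneq t 1.
    rewrite t1e in r0 *.
    apply: (@lt_le_trans _ _ (rawH P 1 x (inr j))); last (apply: sum_ge_term; exact: r0).
    rewrite /= subrr mul0r add0r.
    apply: (@lt_le_trans _ _ (Num.max 0 (1 * tau x - x (inl w)))).
      by rewrite xw subr0 mul1r lt_max orbC lt_def tp tau0.
    rewrite (bigD1 w) //= lerDl; apply: sumr_ge0 => w' _; by rewrite le_max lexx.
  apply: (@lt_le_trans _ _ (rawH P t x (inr i))); last (apply: sum_ge_term; exact: r0).
  rewrite /=; apply: (@lt_le_trans _ _ ((1 - t) * x (inr i))).
    by apply: mulr_gt0 => //; rewrite subr_gt0 lt_neqAle t1' t1.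
  by rewrite lerDl; apply: sumr_ge0 => w' _; rewrite le_max lexx.
have key : forall Q' : 'I_r -> {set W}, (forall i, P i \subset Q' i) ->
    (t != 1 -> facecond Q' x) -> realization R Q' (Hh P (t, x)).
  move=> Q' PQ' hQ'; apply: nz_real => //= i.
  have [->|t1'] := eqVneq t 1.
    rewrite /= subrr mul0r add0r => /eqP /(psumr_neq0P _) [].
      by move=> w _; rewrite le_max lexx.
    move=> w /andP [wP]; rewrite lt_max ltxx /= subr_gt0 => hw.
    exists w; first exact: (fintype.subsetP (PQ' i)).
    by apply/eqP; rewrite eq_maxl // subr_le0 ltW.
  have [xi|xi] := eqVneq (x (inr i)) 0.
    rewrite /= xi mulr0 add0r => /eqP /(psumr_neq0P _) [].
      by move=> w _; rewrite le_max lexx.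
    move=> w /andP [wP]; rewrite lt_max ltxx /= subr_gt0 => hw.
    exists w; first exact: (fintype.subsetP (PQ' i)).
    by apply/eqP; rewrite eq_maxl // subr_le0 ltW.
  move=> _; have [w wQ xw] := hQ' t1' i xi; exists w => //=.
  by apply/eqP; rewrite eq_maxl // xw sub0r oppr_le0; apply: mulr_ge0.
split => //.
  apply: key => // _ i xi; have [w wQ xw] := xf i xi; by exists w => //.
move=> t1e; apply: key => [i|]; [exact: subxx | by rewrite t1e eqxx].
Qed.

Lemma Hh0 P (x : X) : realization R P x -> forall Q, Hh Q (0, x) = x.
Proof.
move=> hx Q; have [x0 x1 _] := realP hx; rewrite /Hh /=.
have -> : rawH Q 0 x = x.
  apply: funext => -[w|i] /=; rewrite ?mul0r ?subr0 ?subr0 ?mul1r.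
    by rewrite max_r.
  rewrite big1 ?addr0 // => w _; rewrite sub0r; apply/eqP; rewrite eq_maxl oppr_le0 //.
by apply: funext => v; rewrite /nz x1 divr1.
Qed.

Lemma Hh_ct P (T : topologicalType) (p : T) (tt : T -> R) (xx : T -> X) :
  ct p tt -> (forall v, ct p (fun z => xx z v)) ->
  0 < \sum_v rawH P (tt p) (xx p) v ->
  {for p, continuous (fun z => Hh P (tt z, xx z))}.
Proof.
move=> ht hx D0.
have htau : ct p (fun z => tau (xx z)) by apply: ctsum => i.
have hraw : forall v, ct p (fun z => rawH P (tt z) (xx z) v).
  move=> [w|i] /=.
    apply: ctmax; first exact: ct_cst.
    by apply: ctB => //; apply: ctM.
  apply: ctD; first by apply: ctM => //; apply: ctB => //; exact: ct_cst.
  apply: ctsum => w; apply: ctmax; first exact: ct_cst.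
  by apply: ctB => //; apply: ctM.
apply: ptws_ct => v; rewrite /Hh /nz /=.
apply: ctM => //; apply: ctV; first by rewrite gt_eqF.
exact: ctsum.
Qed.


Lemma itv01 (t : R) : `[0, 1]%classic t -> 0 <= 1 - t /\ 1 - t <= 1.
Proof. rewrite /= in_itv /= => /andP [t0 t1]; split; lra. Qed.

Lemma hom_Hh (P Q : 'I_r -> {set W}) :
  (forall i, P i \subset Q i) -> (\bigcup_(i < r) P i = [set: W])%SET ->
  homotopic R (realization R Q) (realization R Q) (fun x => Hh P (1, x)) id.
Proof.
move=> PQ cov.
exists (fun q : R * X => Hh P (1 - q.1, q.2)); split; [split|split].
- apply: continuous_in_subspaceT => q; rewrite in_setE => -[/itv01 [t0 t1] hq2].
  have [D0 _ _] := Hh_good PQ cov hq2 t0 t1.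
  apply: (Hh_ct (tt := fun q : R * X => 1 - q.1) (xx := fun q : R * X => q.2)) => //.
    by apply: ctB; [exact: ct_cst | exact: ct_fst].
  move=> v; apply: (ct_comp (g := fun q : R * X => q.2) (h := fun y : X => y v)); [exact: ct_snd | exact: ct_eval].
- move=> _ [q [/itv01 [t0 t1] hq2] <-].
  by have [_ ? _] := Hh_good PQ cov hq2 t0 t1.
- by move=> x hx /=; rewrite subr0.
- by move=> x hx /=; rewrite subrr (Hh0 hx).
Qed.


Lemma real_sub (M N : 'I_r -> {set W}) (x : X) :
  (forall i, M i \subset N i) -> realization R M x -> realization R N x.
Proof.
move=> MN hx; have [x0 x1 xf] := realP hx.
have -> : x = nz x by apply: funext => v; rewrite /nz x1 divr1.
apply: nz_real => //; first by rewrite x1 ltr01.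
move=> i xi; have [w wM xw] := xf i xi; exists w => //.
exact: (fintype.subsetP (MN i)).
Qed.

Lemma part3 (M N : 'I_r -> {set W}) :
  (forall i, M i \subset N i) -> (\bigcup_(i < r) M i = [set: W])%SET ->
  homotopy_equivalence R (fun x : X => x) (realization R M) (realization R N).
Proof.
move=> MN cov; split.
  split; first by apply: continuous_subspaceT => x; exact: cvg_id.
  by move=> _ [x hx <-]; exact: real_sub hx.
exists (fun x => Hh M (1, x)); split; last split.
- split.
    apply: continuous_in_subspaceT => x; rewrite in_setE => hx.
    have [D0 _ _] := Hh_good MN cov hx ler01 (lexx 1).
    apply: (Hh_ct (tt := fun _ => 1) (xx := fun y : X => y)) => //.
      exact: ct_cst.
    move=> v; exact: ct_eval.
  move=> _ [x hx <-].
  by have [_ _ h] := Hh_good MN cov hx ler01 (lexx 1); apply: h.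
- exact: hom_Hh (fun i => subxx (M i)) cov.
- exact: hom_Hh MN cov.
Qed.


Lemma real_of Q (u : X) :
  (forall v, 0 <= u v) -> \sum_v u v = 1 -> facecond Q u -> realization R Q u.
Proof.
move=> u0 u1 uf; have -> : u = nz u by apply: funext => v; rewrite /nz u1 divr1.
by apply: nz_real => //; rewrite u1 ltr01.
Qed.

Lemma part2 (N : 'I_r -> {set W}) :
  (\bigcup_(i < r) N i != [set: W])%SET ->
  homotopy_equiv R (realization R N) (one_point R W).
Proof.
move=> ncov.
have [w0 hw0] : exists w0, forall i, w0 \notin N i.
  have : ~~ ([set: W] \subset \bigcup_(i < r) N i)%SET.
    by rewrite finset.subTset.
  case/fintype.subsetPn => w0 _ hw; exists w0 => i; apply: contra hw => h.
  by apply/bigcupP; exists i.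
pose e : X := fun v => if v == inl w0 then 1 else 0.
have e0 : forall v, 0 <= e v by move=> v; rewrite /e; case: ifP.
have e1 : \sum_v e v = 1.
  rewrite (bigD1 (inl w0)) //= /e eqxx big1 ?addr0 // => v /negPf ->; done.
have ei : forall i, e (inr i) = 0 by [].
have ew : forall i w, w \in N i -> e (inl w) = 0.
  move=> i w wN; rewrite /e; case: eqP => // -[ew]; by move: (hw0 i); rewrite -ew wN.
have ereal : realization R N e.
  by apply: real_of => // i; rewrite ei eqxx.
exists (fun _ : X => (fun _ : W => 0 : R) : {ptws W -> R}); split.
  split; first by apply: continuous_subspaceT => x; apply: ptws_ct => v; exact: ct_cst.
  by move=> _ [x _ <-].
exists (fun _ => e); split; last split.
- split; first by apply: continuous_subspaceT => x; apply: ptws_ct => v; exact: ct_cst.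
  by move=> _ [y _ <-].
- exists (fun q : R * X => (fun v => (1 - q.1) * e v + q.1 * q.2 v) : X).
  split; [split|split].
  + apply: continuous_in_subspaceT => q _; apply: ptws_ct => v.
    apply: ctD; apply: ctM.
    * by apply: ctB; [exact: ct_cst | exact: ct_fst].
    * exact: ct_cst.
    * exact: ct_fst.
    * apply: (ct_comp (g := fun q : R * X => q.2) (h := fun y : X => y v)); [exact: ct_snd | exact: ct_eval].
  + move=> _ [q [hq hx] <-]; move: hq; rewrite /= in_itv /= => /andP [t0 t1].
    have [x0 x1 xf] := realP hx.
    apply: real_of => /=.
    * move=> v; apply: addr_ge0; apply: mulr_ge0 => //; lra.
    * rewrite big_split /= -!mulr_sumr e1 x1; ring.
    * move=> i; rewrite ei mulr0 add0r.
      have [xi0|xi] := eqVneq (q.2 (inr i)) 0; first by rewrite xi0 mulr0 eqxx.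
      move=> _; have [w wN xw] := xf i xi; exists w => //.
      by rewrite (ew i w wN) xw !mulr0 addr0.
  + by move=> x hx; apply: funext => v /=; rewrite subr0 mul1r mul0r addr0.
  + by move=> x hx; apply: funext => v /=; rewrite subrr mul0r mul1r add0r.
- exists (fun q : R * {ptws W -> R} => (fun _ : W => 0 : R) : {ptws W -> R}).
  split; [split|split].
  + by apply: continuous_subspaceT => q; apply: ptws_ct => v; exact: ct_cst.
  + by move=> _ [q _ <-].
  + by [].
  + by move=> x ->.
Qed.


Definition nrm (u : W -> R) : {ptws W -> R} :=
  fun w => u w / Num.sqrt (\sum_w' u w' ^+ 2).

Lemma sumsq_gt0 (u : W -> R) : (exists w, u w != 0) -> 0 < \sum_w u w ^+ 2.
Proof.
move=> [w uw]; apply: (@lt_le_trans _ _ (u w ^+ 2)).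
  by rewrite lt_def sqr_ge0 sqrf_eq0 uw.
by apply: sum_ge_term => j; exact: sqr_ge0.
Qed.

Lemma nrm_unit (u : W -> R) : (exists w, u w != 0) -> \sum_w nrm u w ^+ 2 = 1.
Proof.
move=> /sumsq_gt0 D0; rewrite /nrm.
under eq_bigr do rewrite expr_div_n sqr_sqrtr ?ltW //.
by rewrite -mulr_suml mulfV // gt_eqF.
Qed.

Lemma nrm_id (u : W -> R) : \sum_w u w ^+ 2 = 1 -> nrm u = u.
Proof. by move=> h; apply: funext => w; rewrite /nrm h sqrtr1 divr1. Qed.

Lemma ctX2 (T : topologicalType) (p : T) (f : T -> R) : ct p f -> ct p (fun x => f x ^+ 2).
Proof. by move=> h; under eq_fun do rewrite expr2; exact: ctM. Qed.

Lemma nrm_ct (T : topologicalType) (p : T) (u : T -> W -> R) :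
  (forall w, ct p (fun z => u z w)) -> (exists w, u p w != 0) ->
  {for p, continuous (fun z => nrm (u z))}.
Proof.
move=> hu /sumsq_gt0 D0; apply: ptws_ct => w; rewrite /nrm.
apply: ctM => //; apply: ctV; first by rewrite sqrtr_eq0 -ltNge.
by apply: ctsqrt; apply: ctsum => w'; apply: ctX2.
Qed.

Definition beta : R := ((#|W|.+1)%:R)^-1.

Lemma beta_gt0 : 0 < beta.
Proof. by rewrite invr_gt0 ltr0n. Qed.

Lemma betaS : #|W|%:R * beta + beta = 1.
Proof.
by rewrite -{2}(mul1r beta) -mulrDl natr1 mulfV // pnatr_eq0.
Qed.

Lemma sumW_const (c : R) : \sum_(w : W) c = #|W|%:R * c.
Proof. by rewrite sumr_const mulr_natl. Qed.

Definition fS (x : X) : {ptws W -> R} := nrm (fun w => x (inl w) - beta).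

Lemma fS_D N (x : X) : realization R N x -> exists w, x (inl w) - beta != 0.
Proof.
move=> hx; have [x0 x1 xf] := realP hx.
case: (pselect (exists w, x (inl w) - beta != 0)) => // /forallNP hall.
exfalso.
have xb : forall w, x (inl w) = beta.
  by move=> w; apply/eqP; rewrite -subr_eq0; apply/negPn/negP => /(hall w).
have : tau x = beta.
  move: x1; rewrite sumV; under eq_bigr do rewrite xb.
  rewrite sumW_const /tau => h; have := betaS; lra.
move=> tb; have : tau x != 0 by rewrite tb gt_eqF // beta_gt0.
move=> /eqP /(psumr_neq0P _) [].
  by move=> i _.
move=> i /andP [_ /lt0r_neq0 /xf [w _]]; rewrite xb => /eqP.
by rewrite gt_eqF // beta_gt0.
Qed.

Lemma fS_ct N (x : X) : realization R N x -> {for x, continuous fS}.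
Proof.
move=> hx; apply: (nrm_ct (u := fun z : X => fun w => z (inl w) - beta)).
  by move=> w; apply: ctB; [exact: ct_eval | exact: ct_cst].
exact: fS_D hx.
Qed.


Definition rawG (N : 'I_r -> {set W}) (y : W -> R) (v : V) : R :=
  match v with
  | inl w => Num.max 0 (y w + \sum_w' y w')
  | inr i => \sum_(w in N i) Num.max 0 (- y w - \sum_w' y w')
  end.
Definition gS N (y : {ptws W -> R}) : X := nz (rawG N y).

Lemma rawG_ge0 N y v : 0 <= rawG N y v.
Proof.
case: v => [w|i] /=; first by rewrite le_max lexx.
by apply: sumr_ge0 => w _; rewrite le_max lexx.
Qed.

Lemma rawG_D (N : 'I_r -> {set W}) (y : W -> R) :
  (\bigcup_(i < r) N i = [set: W])%SET -> \sum_w y w ^+ 2 = 1 ->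
  0 < \sum_v rawG N y v.
Proof.
move=> cov hy; rewrite lt_def sumr_ge0 ?andbT; last by move=> v _; exact: rawG_ge0.
apply/negP => /eqP h0.
have z : forall v, rawG N y v = 0.
  by move=> v; apply: (psumr_eq0P _ h0) => // v' _; exact: rawG_ge0.
set s := \sum_w' y w'.
have ys : forall w, y w = - s.
  move=> w; have := z (inl w); rewrite /= => /eqP; rewrite eq_maxl => h1.
  have : (w \in [set: W])%SET by rewrite inE.
  rewrite -cov => /bigcupP [j _ wN].
  have := z (inr j); rewrite /= => h2.
  have h3 : Num.max 0 (- y w - s) = 0.
    by apply: (psumr_eq0P _ h2) => // w' _; rewrite le_max lexx.
  move/eqP: h3; rewrite eq_maxl -/s => h3; rewrite -/s in h1; lra.
have hs : \sum_w y w = \sum_(w : W) (- s) by apply: eq_bigr => w _; exact: ys.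
rewrite sumW_const -/s mulrN in hs.
have : (#|W|%:R + 1) * s = 0 by rewrite mulrDl mul1r; lra.
move/eqP; rewrite mulf_eq0 natr1 pnatr_eq0 /= => /eqP s0.
move: hy; under eq_bigr do rewrite ys s0 oppr0 expr0n /=.
by rewrite big1 // => /eqP; rewrite eq_sym oner_eq0.
Qed.


Lemma gS_real (N : 'I_r -> {set W}) (y : W -> R) :
  (\bigcup_(i < r) N i = [set: W])%SET -> \sum_w y w ^+ 2 = 1 ->
  realization R N (gS N y).
Proof.
move=> cov hy; apply: nz_real; [exact: rawG_ge0 | exact: rawG_D | ].
move=> i /= /eqP /(psumr_neq0P _) [].
  by move=> w _; rewrite le_max lexx.
move=> w /andP [wN]; rewrite lt_max ltxx /= subr_gt0 => hw.
exists w => //=; apply/eqP; rewrite eq_maxl; lra.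
Qed.

Lemma gS_ct (N : 'I_r -> {set W}) (y : {ptws W -> R}) :
  (\bigcup_(i < r) N i = [set: W])%SET -> \sum_w y w ^+ 2 = 1 ->
  {for y, continuous (gS N)}.
Proof.
move=> cov hy.
have hs : ct y (fun z : {ptws W -> R} => \sum_w' z w').
  by apply: ctsum => w'; exact: ct_eval.
have hraw : forall v, ct y (fun z : {ptws W -> R} => rawG N z v).
  move=> [w|i] /=.
    by apply: ctmax; [exact: ct_cst | apply: ctD => //; exact: ct_eval].
  apply: ctsum => w; apply: ctmax; first exact: ct_cst.
  by apply: ctB => //; apply: ctN; exact: ct_eval.
apply: ptws_ct => v; rewrite /gS /nz.
apply: ctM => //; apply: ctV; first by rewrite gt_eqF // rawG_D.
exact: ctsum.
Qed.


Lemma gf_eq (N : 'I_r -> {set W}) (x : X) :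
  realization R N x -> gS N (fS x) = Hh N (1, x).
Proof.
move=> hx; have [x0 x1 xf] := realP hx.
have D0 := sumsq_gt0 (fS_D hx).
set c := (Num.sqrt (\sum_w (x (inl w) - beta) ^+ 2))^-1.
have c0 : 0 < c by rewrite invr_gt0 sqrtr_gt0.
have fSE : forall w, fS x w = (x (inl w) - beta) * c by [].
have sig : \sum_w x (inl w) + tau x = 1 by rewrite -x1 sumV.
have key : forall w, fS x w + \sum_w' fS x w' = (x (inl w) - tau x) * c.
  move=> w; rewrite fSE; under eq_bigr do rewrite fSE.
  rewrite -mulr_suml sumrB sumW_const -mulrDl; congr (_ * _).
  have := betaS; lra.
rewrite /gS; have -> : rawG N (fS x) = fun v => c * rawH N 1 x v.
  apply: funext => -[w|i] /=.
    by rewrite key mul1r maxr_pMr ?ltW // mulr0 mulrC.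
  rewrite subrr mul0r add0r mulr_sumr; apply: eq_bigr => w _.
  rewrite -opprD key mul1r maxr_pMr ?ltW // mulr0 -mulNr opprB.
  by rewrite [c * _]mulrC.
by rewrite nzZ // gt_eqF.
Qed.


Lemma KS_nz (N : 'I_r -> {set W}) (y : {ptws W -> R}) (t : R) :
  (\bigcup_(i < r) N i = [set: W])%SET -> \sum_w y w ^+ 2 = 1 ->
  0 <= t -> t <= 1 ->
  exists w, (1 - t) * fS (gS N y) w + t * y w != 0.
Proof.
move=> cov hy t0 t1.
have hx := gS_real cov hy.
have [x0 x1 xf] := realP hx.
set x := gS N y in hx x0 x1 xf *.
have D0 := sumsq_gt0 (fS_D hx).
set c := (Num.sqrt (\sum_w (x (inl w) - beta) ^+ 2))^-1.
have c0 : 0 < c by rewrite invr_gt0 sqrtr_gt0.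
have fSE : forall w, fS x w = (x (inl w) - beta) * c by [].
have Dr := rawG_D cov hy.
have xE : forall v, x v = rawG N y v / \sum_v' rawG N y v' by [].
case: (pselect (exists w, (1 - t) * fS x w + t * y w != 0)) => // /forallNP hall.
exfalso.
have hall' : forall w, (1 - t) * fS x w + t * y w = 0.
  by move=> w; apply/eqP/negPn/negP => /(hall w).
have [tz|tnz] := eqVneq t 0.
  have [w] := fS_D hx; have := hall' w; rewrite tz subr0 mul1r mul0r addr0 fSE.
  by move/eqP; rewrite mulf_eq0 (gt_eqF c0) orbF => ->.
have [to|tno] := eqVneq t 1.
  have y0 : forall w, y w = 0.
    by move=> w; have := hall' w; rewrite to subrr mul0r add0r mul1r.
  move: hy; rewrite big1 => [/eqP|w _]; first by rewrite eq_sym oner_eq0.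
  by rewrite y0 expr0n.
have tp : 0 < t by rewrite lt_neqAle eq_sym tnz t0.
have t1p : 0 < 1 - t by rewrite subr_gt0 lt_neqAle tno t1.
set s := \sum_w y w.
have fact1 : forall w, y w + s < 0 -> 0 < y w.
  move=> w hw.
  have xw0 : x (inl w) = 0.
    by rewrite xE /= -/s; apply/eqP; rewrite mulf_eq0; apply/orP; left;
       rewrite eq_maxl ltW.
  have := hall' w; rewrite fSE xw0 sub0r => h.
  have : 0 < t * y w.
    have : 0 < (1 - t) * (beta * c) by apply: mulr_gt0 => //; apply: mulr_gt0 => //; exact: beta_gt0.
    move: h; rewrite mulNr; lra.
  by rewrite pmulr_rgt0.
case: (pselect (exists w0, y w0 + s < 0)) => [[w0 hw0]|/forallNP hB].
  have y0 := fact1 w0 hw0.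
  have ypos : forall w, 0 < y w.
    move=> w; case: (ltP (y w + s) 0) => [/fact1 //|h]; lra.
  have : y w0 <= s by apply: sum_ge_term => w; exact: ltW.
  lra.
have hB' : forall w, 0 <= y w + s by move=> w; rewrite leNgt; apply/negP => /(hB w).
have ri0 : forall i, rawG N y (inr i) = 0.
  move=> i /=; apply: big1 => w _; apply/eqP; rewrite eq_maxl -/s.
  have := hB' w; lra.
have tau0 : tau x = 0.
  by rewrite /tau; apply: big1 => i _; rewrite xE ri0 mul0r.
have sx : \sum_w x (inl w) = 1 by move: x1; rewrite sumV -/(tau x) tau0 addr0.
have sa : \sum_w fS x w = beta * c.
  under eq_bigr do rewrite fSE.
  rewrite -mulr_suml sumrB sx sumW_const; congr (_ * _); have := betaS; lra.
have hsum : (1 - t) * (beta * c) + t * s = 0.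
  rewrite -sa mulr_sumr /s mulr_sumr -big_split /=; apply: big1 => w _; exact: hall' w.
have : t * s < 0.
  have : 0 < (1 - t) * (beta * c) by apply: mulr_gt0 => //; apply: mulr_gt0 => //; exact: beta_gt0.
  lra.
rewrite pmulr_rlt0 // => sneg.
have : 0 <= \sum_w (y w + s) by apply: sumr_ge0 => w _; exact: hB' w.
rewrite big_split /= -/s sumW_const => h.
have : 0 <= (#|W|%:R + 1) * s by rewrite mulrDl mul1r; lra.
rewrite pmulr_rge0; first lra.
by rewrite natr1 ltr0n.
Qed.


Lemma part1 (N : 'I_r -> {set W}) :
  (\bigcup_(i < r) N i = [set: W])%SET ->
  homotopy_equiv R (realization R N) (unit_sphere R W).
Proof.
move=> cov; exists fS; split.
  split.
    apply: continuous_in_subspaceT => x; rewrite in_setE => hx; exact: fS_ct hx.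
  move=> _ [x hx <-]; rewrite /unit_sphere /=; exact: nrm_unit (fS_D hx).
exists (gS N); split; last split.
- split.
    apply: continuous_in_subspaceT => y; rewrite in_setE => hy; exact: gS_ct cov hy.
  move=> _ [y hy <-]; exact: gS_real cov hy.
- have [H [hH [h0 h1]]] := hom_Hh (fun i => subxx (N i)) cov.
  exists H; split => //; split => // x hx; by rewrite h0 //= gf_eq.
- exists (fun q : R * {ptws W -> R} =>
    nrm (fun w => (1 - q.1) * fS (gS N q.2) w + q.1 * q.2 w)).
  have fg1 : forall y : {ptws W -> R}, \sum_w y w ^+ 2 = 1 ->
      \sum_w fS (gS N y) w ^+ 2 = 1.
    by move=> y hy; apply: nrm_unit; apply: fS_D (gS_real cov hy).
  split; [split|split].
  + apply: continuous_in_subspaceT => q; rewrite in_setE => -[hq hy].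
    move: hq; rewrite /= in_itv /= => /andP [t0 t1].
    apply: nrm_ct; last exact: KS_nz.
    move=> w; apply: ctD; apply: ctM.
    * by apply: ctB; [exact: ct_cst | exact: ct_fst].
    * apply: (ct_comp (g := fun z : R * {ptws W -> R} => fS (gS N z.2))
                     (h := fun y : {ptws W -> R} => y w)); last exact: ct_eval.
      apply: (continuous_comp (f := fun z : R * {ptws W -> R} => z.2)
                              (g := fun y => fS (gS N y))); first exact: ct_snd.
      apply: (continuous_comp (f := gS N) (g := fS)); first exact: gS_ct cov hy.
      exact: fS_ct (gS_real cov hy).
    * exact: ct_fst.
    * apply: (ct_comp (g := fun z : R * {ptws W -> R} => z.2)
                     (h := fun y : {ptws W -> R} => y w)); [exact: ct_snd | exact: ct_eval].
  + move=> _ [q [hq hy] <-]; move: hq; rewrite /= in_itv /= => /andP [t0 t1].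
    exact: nrm_unit (KS_nz cov hy t0 t1).
  + move=> y hy /=.
    have -> : (fun w => (1 - 0) * fS (gS N y) w + 0 * y w) = fS (gS N y).
      by apply: funext => w; rewrite subr0 mul1r mul0r addr0.
    exact: nrm_id (fg1 y hy).
  + move=> y hy /=.
    have -> : (fun w => (1 - 1) * fS (gS N y) w + 1 * y w) = y.
      by apply: funext => w; rewrite subrr mul0r add0r mul1r.
    exact: nrm_id hy.
Qed.

End Main.

Unset Implicit Arguments.

Theorem proposition4p2 (R : realType) (W : finType) (r : nat)
  (N : 'I_r -> {set W}) :
  ((\bigcup_(i < r) N i = [set: W])%SET ->
     homotopy_equiv R (realization R N) (unit_sphere R W)) /\
  ((\bigcup_(i < r) N i != [set: W])%SET ->
     homotopy_equiv R (realization R N) (one_point R W)) /\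
  (forall M : 'I_r -> {set W},
     (forall i, M i \subset N i) ->
     (\bigcup_(i < r) M i = [set: W])%SET ->
     homotopy_equivalence R (fun x : {ptws W + 'I_r -> R} => x) (realization R M) (realization R N)).
Proof.
split; first exact: part1.
split; first exact: part2.
move=> M MN cov; exact: part3.
Qed.
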